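(* Let $R\in\{\mathrm C,\mathrm S\}$, let $p,q\in[0,1]$ be rational numbers with $p<q$, let $I$ be a closed interval with $I\subseteq(0,1)$, and let $\varpi\in\Omega$ be wCH-random for $I$. Then a path $\omega\in\Omega$ is $R$-random for $\varphi^\varpi_{p,q}$ if and only if it is $R$-random for $[p,q]$.
   Context: Notation: $\mathbb N=\{1,2,\dots\}$, $\mathbb N_0=\mathbb N\cup\{0\}$. $\Omega=\{0,1\}^{\mathbb N}$ is the set of paths $\omega=(\omega_1,\omega_2,\dots)$; $\omega_{1:n}=(\omega_1,\dots,\omega_n)$, $\omega_{1:0}=\square$. $\mathbb S=\bigcup_{n\in\mathbb N_0}\{0,1\}^n$ is the set of situations, $|s|$ the length, $sx$ concatenation. For $r\in[0,1]$, $f:\{0,1\}\to\mathbb R$: $E_r(f)=rf(1)+(1-r)f(0)$; for a closed interval $I\subseteq[0,1]$, $\overline E_I(f)=\max_{r\in I}E_r(f)$. A forecasting system is a map $\varphi$ from $\mathbb S$ to closed subintervals of $[0,1]$, $\underline\varphi(s)=\min\varphi(s)$, $\overline\varphi(s)=\max\varphi(s)$; being random for an interval $I$ means being random for the constant forecasting system with value $I$. A real process is $F:\mathbb S\to\mathbb R$; $\Delta F(s)$ is $x\mapsto F(sx)-F(s)$. $M$ is a supermartingale for $\varphi$ if $\overline E_{\varphi(s)}(\Delta M(s))\le0$ for all $s$. A test supermartingale for $\varphi$ is a non-negative supermartingale $T$ for $\varphi$ with $T(\square)=1$. Computability: maps from countable effectively encoded domains to $\mathbb N_0$, $\mathbb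 Q$ or $\{0,1\}$ are recursive if Turing-computable; a real map $r$ is computable if $|r(d)-q(d,n)|<2^{-n}$ for a recursive rational $q$. $\overline{\mathbb T}_{\mathrm C}(\varphi)=\overline{\mathbb T}_{\mathrm S}(\varphi)$ is the set of positive, rational-valued, recursive test supermartingales for $\varphi$. $\omega$ is C-random for $\varphi$ if no $T\in\overline{\mathbb T}_{\mathrm C}(\varphi)$ has $\limsup_nT(\omega_{1:n})=\infty$. A real growth function is a computable, non-decreasing, unbounded $\tau:\mathbb N_0\to[0,\infty)$; $\omega$ is S-random for $\varphi$ if there are no $T\in\overline{\mathbb T}_{\mathrm S}(\varphi)$ and real growth function $\tau$ with $\limsup_n[T(\omega_{1:n})-\tau(n)]\ge0$. A selection process is $S:\mathbb S\to\{0,1\}$, temporal if $S(s)$ depends only on $|s|$ (written $S(n)$). A path $\varpi$ is wCH-random for $\varphi$ if for every recursive temporal selection process $S$ with $\lim_n\sum_{k=0}^{n-1}S(k)=\infty$: $\liminf_n\frac{\sum_{k=0}^{n-1}S(k)[\varpi_{k+1}-\underline\varphi(\varpi_{1:k})]}{\sum_{k=0}^{n-1}S(k)}\ge0$ and $\limsup_n\frac{\sum_{k=0}^{n-1}S(k)[\varpi_{k+1}-\overline\varphi(\varpi_{1:k})]}{\sum_{k=0}^{n-1}S(k)}\le0$. For $\varpi\in\Omega$, $\varphi^\varpi_{p,q}$ is the precise forecasting system with $\varphi^\varpi_{p,q}(s)=p$ if $\varpi_{|s|+1}=0$ and $\varphi^\varpi_{p,q}(s)=q$ if $\varpi_{|s|+1}=1$.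 *)

(* Defs.v *)
From Stdlib Require Import Reals Lra Lia List QArith.
Open Scope R_scope.

Inductive code : Type :=
| CZero : code
| CSucc : code
| CProj : nat -> code
| CComp : code -> list code -> code
| CPrimRec : code -> code -> code
| CMu : code -> code.

Inductive eval : code -> list nat -> nat -> Prop :=
| ev_zero : forall v, eval CZero v 0
| ev_succ : forall x v, eval CSucc (x :: v) (S x)
| ev_proj : forall i v, (i < length v)%nat -> eval (CProj i) v (nth i v 0%nat)
| ev_comp : forall f gs v ws y, evals gs v ws -> eval f ws y -> eval (CComp f gs) v y
| ev_prim0 : forall f g v y, eval f v y -> eval (CPrimRec f g) (0%nat :: v) y
| ev_primS : forall f g n v y z,
    eval (CPrimRec f g) (n :: v) y -> eval g (n :: y :: v) z ->
    eval (CPrimRec f g) (S n :: v) z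
| ev_mu : forall f v n,
    eval f (n :: v) 0 ->
    (forall m, (m < n)%nat -> exists k, eval f (m :: v) (S k)) ->
    eval (CMu f) v n
with evals : list code -> list nat -> list nat -> Prop :=
| evs_nil : forall v, evals nil v nil
| evs_cons : forall g gs v y ys, eval g v y -> evals gs v ys -> evals (g :: gs) v (y :: ys).

(* A situation is a finite binary string (true = 1, false = 0). *)
Definition sit := list bool.

(* effective encoding of situations into nat: leading 1 followed by the bits *)
Definition enc_sit (s : sit) : nat :=
  fold_left (fun acc (b : bool) => (2 * acc + (if b then 1 else 0))%nat) s 1%nat.

(* A path omega = (omega_1, omega_2, ...) is represented by w : nat -> bool
   with omega_k = w (k-1). *)
Definition path := nat -> bool.

Fixpoint prefix (w : path) (n : nat) : sit :=
  match n with
  | O => nil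
  | S n' => prefix w n' ++ (w n' :: nil)
  end.

Definition b2R (b : bool) : R := if b then 1 else 0.

Definition rec_rat_sit (f : sit -> R) : Prop :=
  exists ca cb cd : code, forall s : sit, exists a b d : nat,
    eval ca (enc_sit s :: nil) a /\ eval cb (enc_sit s :: nil) b /\
    eval cd (enc_sit s :: nil) d /\
    f s = (INR a - INR b) / INR (S d).

Definition computable_real_nat (tau : nat -> R) : Prop :=
  exists ca cb cd : code, forall n k : nat, exists a b d : nat,
    eval ca (n :: k :: nil) a /\ eval cb (n :: k :: nil) b /\
    eval cd (n :: k :: nil) d /\
    Rabs (tau n - (INR a - INR b) / INR (S d)) < / (2 ^ k).

Definition rec_temporal (Sel : nat -> bool) : Prop :=
  exists c : code, forall n : nat, eval c (n :: nil) (if Sel n then 1%nat else 0%nat).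

(* A closed interval [lo, hi] is represented by the pair (lo, hi). *)
Definition fsys := sit -> (R * R).

Definition lowf (phi : fsys) (s : sit) : R := fst (phi s).
Definition upf (phi : fsys) (s : sit) : R := snd (phi s).

Definition E (r : R) (f : bool -> R) : R := r * f true + (1 - r) * f false.

Definition Delta (F : sit -> R) (s : sit) : bool -> R :=
  fun x => F (s ++ (x :: nil)) - F s.

Definition supermartingale (phi : fsys) (M : sit -> R) : Prop :=
  forall s : sit, forall r : R, lowf phi s <= r <= upf phi s -> E r (Delta M s) <= 0.

(* overline{T}_C(phi) = overline{T}_S(phi): positive, rational-valued, recursive
   test supermartingales *)
Definition test_class (phi : fsys) (T : sit -> R) : Prop :=
  supermartingale phi T /\ T nil = 1 /\ (forall s, 0 < T s) /\ rec_rat_sit T.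

Definition growth_function (tau : nat -> R) : Prop :=
  computable_real_nat tau /\
  (forall n, 0 <= tau n) /\
  (forall n m, (n <= m)%nat -> tau n <= tau m) /\
  (forall B, exists n, B < tau n).

Definition C_random (phi : fsys) (w : path) : Prop :=
  ~ exists T, test_class phi T /\
      forall B : R, forall N : nat, exists n, (N <= n)%nat /\ B < T (prefix w n).

Definition S_random (phi : fsys) (w : path) : Prop :=
  ~ exists T tau, test_class phi T /\ growth_function tau /\
      forall eps : R, 0 < eps -> forall N : nat, exists n, (N <= n)%nat /\
        - eps < T (prefix w n) - tau n.

Inductive rkind := RC | RS.

Definition R_random (k : rkind) (phi : fsys) (w : path) : Prop :=
  match k with RC => C_random phi w | RS => S_random phi w end.

Fixpoint rsum (f : nat -> R) (n : nat) : R :=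
  match n with O => 0 | S n' => rsum f n' + f n' end.

Definition wCH_random (phi : fsys) (v : path) : Prop :=
  forall Sel : nat -> bool, rec_temporal Sel ->
    (forall B : R, exists N, forall n, (N <= n)%nat -> B < rsum (fun k => b2R (Sel k)) n) ->
    (forall eps : R, 0 < eps -> exists N, forall n, (N <= n)%nat ->
       - eps < rsum (fun k => b2R (Sel k) * (b2R (v k) - lowf phi (prefix v k))) n
               / rsum (fun k => b2R (Sel k)) n) /\
    (forall eps : R, 0 < eps -> exists N, forall n, (N <= n)%nat ->
       rsum (fun k => b2R (Sel k) * (b2R (v k) - upf phi (prefix v k))) n
               / rsum (fun k => b2R (Sel k)) n < eps).

Definition const_fs (a b : R) : fsys := fun _ => (a, b).

Definition phi_pq (v : path) (p q : R) : fsys :=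
  fun s => if v (length s) then (q, q) else (p, p).

(* Main.v *)
Require Import Defs.
From Stdlib Require Import Reals Lra Lia List QArith.
Import ListNotations.
Import Defs.
Open Scope R_scope.

Lemma ev_proj' i v y : (i < length v)%nat -> y = nth i v 0%nat -> eval (CProj i) v y.
Proof. intros H ->. now constructor. Qed.

Fixpoint constc (c : nat) : code :=
  match c with O => CZero | S c => CComp CSucc (constc c :: nil) end.

Lemma ev_const c v : eval (constc c) v c.
Proof. induction c; simpl. constructor. econstructor. constructor. exact IHc. constructor. constructor. Qed.

Definition mk1 (c e : code) := CComp c [e].
Definition mk2 (c e1 e2 : code) := CComp c [e1; e2].

Lemma ev_mk1 c e v x z : eval e v x -> eval c [x] z -> eval (mk1 c e) v z.
Proof. intros. econstructor; [|eassumption]. repeat constructor; auto. Qed.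
Lemma ev_mk2 c e1 e2 v x y z : eval e1 v x -> eval e2 v y -> eval c [x;y] z -> eval (mk2 c e1 e2) v z.
Proof. intros. econstructor; [|eassumption]. repeat constructor; auto. Qed.

Definition addc := CPrimRec (CProj 0) (mk1 CSucc (CProj 1)).
Lemma ev_addc n x z : z = (n + x)%nat -> eval addc [n; x] z.
Proof.
  intros ->. induction n.
  - apply ev_prim0. apply ev_proj'; simpl; auto.
  - eapply ev_primS. exact IHn. eapply ev_mk1. apply ev_proj'; simpl; auto. constructor.
Qed.

Definition mulc := CPrimRec CZero (mk2 addc (CProj 1) (CProj 2)).
Lemma ev_mulc n x z : z = (n * x)%nat -> eval mulc [n; x] z.
Proof.
  intros ->. induction n.
  - apply ev_prim0. constructor.
  - eapply ev_primS. exact IHn. eapply ev_mk2; try (apply ev_proj'; simpl; eauto; fail).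
    apply ev_addc. simpl. lia.
Qed.

Definition predc := CPrimRec CZero (CProj 0).
Lemma ev_predc n z : z = Nat.pred n -> eval predc [n] z.
Proof.
  intros ->. induction n.
  - apply ev_prim0. constructor.
  - eapply ev_primS. exact IHn. apply ev_proj'; simpl; auto.
Qed.

Definition subc := CPrimRec (CProj 0) (mk1 predc (CProj 1)).
Lemma ev_subc n x z : z = (x - n)%nat -> eval subc [n; x] z.
Proof.
  intros ->. induction n.
  - apply ev_prim0. apply ev_proj'; simpl; auto. lia.
  - eapply ev_primS. exact IHn. eapply ev_mk1. apply ev_proj'; simpl; auto.
    apply ev_predc. lia.
Qed.

Definition sgc := CPrimRec CZero (constc 1).
Lemma ev_sgc n z : z = Nat.min n 1 -> eval sgc [n] z.
Proof.
  intros ->. induction n.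
  - apply ev_prim0. constructor.
  - eapply ev_primS. exact IHn. replace (Nat.min (S n) 1) with 1%nat by lia. apply ev_const.
Qed.

Definition pow2c := CPrimRec (constc 1) (mk2 addc (CProj 1) (CProj 1)).
Lemma ev_pow2c n z : z = (2 ^ n)%nat -> eval pow2c [n] z.
Proof.
  intros ->. induction n.
  - apply ev_prim0. apply ev_const.
  - eapply ev_primS. exact IHn. eapply ev_mk2; try (apply ev_proj'; simpl; eauto; fail).
    apply ev_addc. simpl. lia.
Qed.

Definition ADD e1 e2 := mk2 addc e1 e2.
Definition MUL e1 e2 := mk2 mulc e1 e2.
Definition SUB e1 e2 := mk2 subc e2 e1.
Definition SG e := mk1 sgc e.
Definition SUCC e := mk1 CSucc e.

Lemma ev_ADD e1 e2 v x y z : eval e1 v x -> eval e2 v y -> z = (x + y)%nat -> eval (ADD e1 e2) v z.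
Proof. intros. eapply ev_mk2; eauto. now apply ev_addc. Qed.
Lemma ev_MUL e1 e2 v x y z : eval e1 v x -> eval e2 v y -> z = (x * y)%nat -> eval (MUL e1 e2) v z.
Proof. intros. eapply ev_mk2; eauto. now apply ev_mulc. Qed.
Lemma ev_SUB e1 e2 v x y z : eval e1 v x -> eval e2 v y -> z = (x - y)%nat -> eval (SUB e1 e2) v z.
Proof. intros. eapply ev_mk2; eauto. now apply ev_subc. Qed.
Lemma ev_SG e v x z : eval e v x -> z = Nat.min x 1 -> eval (SG e) v z.
Proof. intros. eapply ev_mk1; eauto. now apply ev_sgc. Qed.
Lemma ev_SUCC e v x z : eval e v x -> z = S x -> eval (SUCC e) v z.
Proof. intros. subst. eapply ev_mk1; eauto. constructor. Qed.

Definition sumc (c : code) := CPrimRec CZero (ADD (CProj 1) (mk2 c (CProj 0) (CProj 2))).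
Lemma ev_sumc c p (P : nat -> Prop) :
  (forall i, exists z, eval c [i; p] z /\ ((0 < z)%nat <-> P i)) ->
  forall n, exists y, eval (sumc c) [n; p] y /\ ((0 < y)%nat <-> exists i, (i < n)%nat /\ P i).
Proof.
  intros H n. induction n.
  - exists 0%nat. split. apply ev_prim0. constructor. split. lia. intros (i & Hi & _). lia.
  - destruct IHn as (y & Hy & Hiff). destruct (H n) as (z & Hz & Hziff).
    exists (y + z)%nat. split.
    + eapply ev_primS. exact Hy. eapply ev_ADD. apply ev_proj'; simpl; auto.
      eapply ev_mk2; try (apply ev_proj'; simpl; eauto; fail). exact Hz. reflexivity.
    + split.
      * intros Hpos. destruct (Nat.eq_dec z 0).
        -- assert (0 < y)%nat by lia. destruct (proj1 Hiff H0) as (i & ? & ?). exists i; split; auto.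
        -- exists n. split. lia. apply Hziff. lia.
      * intros (i & Hi & HP). destruct (Nat.eq_dec i n).
        -- subst. assert (0 < z)%nat by (apply Hziff; auto). lia.
        -- assert (0 < y)%nat by (apply Hiff; exists i; split; auto; lia). lia.
Qed.


Definition bn (b : bool) : nat := if b then 1%nat else 0%nat.

Lemma enc_app s b : enc_sit (s ++ [b]) = (2 * enc_sit s + bn b)%nat.
Proof. unfold enc_sit. rewrite fold_left_app. simpl. destruct b; reflexivity. Qed.

Lemma enc_range s : (2 ^ length s <= enc_sit s < 2 ^ S (length s))%nat.
Proof.
  induction s using rev_ind.
  - simpl. unfold enc_sit. simpl. lia.
  - rewrite enc_app, length_app. simpl length. rewrite Nat.add_1_r.
    simpl Nat.pow in *. destruct x; simpl bn; lia.
Qed.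

Lemma enc_inj s : forall s', enc_sit s = enc_sit s' -> s = s'.
Proof.
  induction s using rev_ind; intros s' H.
  - destruct s' using rev_ind. auto. rewrite enc_app in H. unfold enc_sit at 1 in H. simpl in H.
    pose proof (enc_range s'). pose proof (Nat.pow_le_mono_r 2 0 (length s') ltac:(lia) ltac:(lia)). simpl in *. lia.
  - destruct s' using rev_ind.
    + rewrite enc_app in H. unfold enc_sit at 2 in H. simpl in H.
      pose proof (enc_range s). pose proof (Nat.pow_le_mono_r 2 0 (length s) ltac:(lia) ltac:(lia)). simpl in *. lia.
    + clear IHs'. rewrite !enc_app in H.
      assert (x = x0) by (destruct x, x0; simpl in H; auto; lia). subst.
      f_equal. apply IHs. lia.
Qed.

Lemma enc_surj n : forall x, (2 ^ n <= x < 2 ^ S n)%nat -> exists s, length s = n /\ enc_sit s = x.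
Proof.
  induction n; intros x Hx.
  - exists nil. simpl in *. unfold enc_sit. simpl. split; auto. lia.
  - destruct (IHn (Nat.div2 x)) as (s & Hl & He).
    { pose proof (Nat.div2_odd x). simpl Nat.pow in *. destruct (Nat.odd x); simpl in H; lia. }
    exists (s ++ [Nat.odd x]). split. rewrite length_app; simpl; lia.
    rewrite enc_app, He. pose proof (Nat.div2_odd x). destruct (Nat.odd x); simpl in *; lia.
Qed.

Lemma prefix_length w n : length (prefix w n) = n.
Proof. induction n; simpl; auto. rewrite length_app; simpl; lia. Qed.


Ltac evt := repeat (first [ eapply ev_ADD | eapply ev_MUL | eapply ev_SUB | eapply ev_SG
  | eapply ev_SUCC | apply ev_const | apply ev_zero | (eapply ev_proj'; [simpl; lia | reflexivity])
  | (eapply ev_mk1; [solve [evt] | eassumption]) | reflexivity ]).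

Section Sel.
Variables (ca cb cd : code) (m km : nat).
Definition X := CProj 0.
Definition X0 := MUL (constc 2) X.
Definition X1 := ADD X0 (constc 1).
Definition Ac e := mk1 ca e.
Definition Bc e := mk1 cb e.
Definition Dc e := SUCC (mk1 cd e).
Definition Lc := ADD (ADD (MUL (MUL (MUL (constc m) (Ac X1)) (Dc X0)) (Dc X))
                          (MUL (MUL (MUL (constc km) (Ac X0)) (Dc X1)) (Dc X)))
                     (MUL (MUL (MUL (constc (m+km)) (Bc X)) (Dc X1)) (Dc X0)).
Definition Rc := ADD (ADD (MUL (MUL (MUL (constc m) (Bc X1)) (Dc X0)) (Dc X))
                          (MUL (MUL (MUL (constc km) (Bc X0)) (Dc X1)) (Dc X)))
                     (MUL (MUL (MUL (constc (m+km)) (Ac X)) (Dc X1)) (Dc X0)).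
Definition Pc := SG (SUB Lc Rc).
End Sel.

Lemma min_sub_iff X Y : (0 < Nat.min (X - Y) 1)%nat <-> INR Y < INR X.
Proof. split; intro H. apply lt_INR; lia. apply INR_lt in H; lia. Qed.

Lemma Pc_spec ca cb cd m km (T : sit -> R) :
  (forall s, exists a b d : nat,
    eval ca (enc_sit s :: nil) a /\ eval cb (enc_sit s :: nil) b /\
    eval cd (enc_sit s :: nil) d /\ T s = (INR a - INR b) / INR (S d)) ->
  forall s, exists z, eval (Pc ca cb cd m km) [enc_sit s] z /\
    ((0 < z)%nat <-> INR m * T (s ++ [true]) + INR km * T (s ++ [false]) - INR (m + km) * T s > 0).
Proof.
  intros HT s.
  destruct (HT s) as (a & b & d & Ha & Hb & Hd & Hs).
  destruct (HT (s ++ [false])) as (a0 & b0 & d0 & Ha0 & Hb0 & Hd0 & Hs0).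
  destruct (HT (s ++ [true])) as (a1 & b1 & d1 & Ha1 & Hb1 & Hd1 & Hs1).
  rewrite enc_app in Ha0, Hb0, Hd0, Ha1, Hb1, Hd1. simpl bn in *. rewrite Nat.add_0_r in Ha0, Hb0, Hd0.
  eexists. split.
  { unfold Pc, Lc, Rc, Ac, Bc, Dc, X1, X0, X. evt. }
  rewrite min_sub_iff. rewrite Hs, Hs0, Hs1. simpl nth.
  rewrite ?plus_INR, ?mult_INR.
  pose proof (lt_0_INR (S d) ltac:(lia)). pose proof (lt_0_INR (S d0) ltac:(lia)).
  pose proof (lt_0_INR (S d1) ltac:(lia)).
  set (D := INR (S d)) in *. set (D0 := INR (S d0)) in *. set (D1 := INR (S d1)) in *. clearbody D D0 D1.
  assert (Hpos : 0 < D * D0 * D1) by (repeat apply Rmult_lt_0_compat; auto).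
  rewrite ?plus_INR.
  match goal with |- ?Y < ?Z <-> ?W > 0 => 
    assert (Heq : Z - Y = W * (D * D0 * D1)) by (field; repeat split; apply Rgt_not_eq; lra);
    split; intro HH; [ assert (HH2 : 0 < W * (D * D0 * D1)) by lra | ];
    [ nra | assert (0 < Z - Y) by (rewrite Heq; apply Rmult_lt_0_compat; auto); lra ] end.
Qed.

Lemma enc_surj_all x : (1 <= x)%nat -> exists s, enc_sit s = x.
Proof.
  intros Hx. destruct (enc_surj (Nat.log2 x) x) as (s & _ & Hs).
  - pose proof (Nat.log2_spec x ltac:(lia)). simpl Nat.pow in *. lia.
  - eauto.
Qed.

Definition selc ca cb cd m km :=
  SG (mk2 (sumc (mk1 (Pc ca cb cd m km) (ADD (CProj 0) (mk1 pow2c (CProj 1)))))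
          (mk1 pow2c (CProj 0)) (CProj 0)).

Lemma selc_spec ca cb cd m km (T : sit -> R) :
  (forall s, exists a b d : nat,
    eval ca (enc_sit s :: nil) a /\ eval cb (enc_sit s :: nil) b /\
    eval cd (enc_sit s :: nil) d /\ T s = (INR a - INR b) / INR (S d)) ->
  forall n, exists y, eval (selc ca cb cd m km) [n] y /\
    ((y = 1%nat /\ exists s, length s = n /\
        INR m * T (s ++ [true]) + INR km * T (s ++ [false]) - INR (m + km) * T s > 0) \/
     (y = 0%nat /\ ~ exists s, length s = n /\
        INR m * T (s ++ [true]) + INR km * T (s ++ [false]) - INR (m + km) * T s > 0)).
Proof.
  intros HT n.
  set (P := fun s => INR m * T (s ++ [true]) + INR km * T (s ++ [false]) - INR (m + km) * T s > 0).
  assert (Hin : forall i, exists z,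
    eval (mk1 (Pc ca cb cd m km) (ADD (CProj 0) (mk1 pow2c (CProj 1)))) [i; n] z /\
    ((0 < z)%nat <-> exists s, enc_sit s = (i + 2 ^ n)%nat /\ P s)).
  { intros i. destruct (enc_surj_all (i + 2 ^ n)) as (s & Hs).
    { pose proof (Nat.pow_le_mono_r 2 0 n ltac:(lia) ltac:(lia)). simpl in *. lia. }
    destruct (Pc_spec ca cb cd m km T HT s) as (z & Hz & Hiff).
    exists z. split.
    - eapply ev_mk1; [| exact Hz]. eapply ev_ADD. apply ev_proj'; simpl; auto.
      eapply ev_mk1. apply ev_proj'; simpl; auto. apply ev_pow2c. reflexivity. simpl. auto.
    - rewrite Hiff. split.
      + intros HP. exists s. split; auto.
      + intros (s' & Hs' & HP). rewrite <- Hs in Hs'. apply enc_inj in Hs'. subst. exact HP. }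
  destruct (ev_sumc _ n _ Hin (2 ^ n)) as (y & Hy & Hyiff).
  exists (Nat.min y 1). split.
  - eapply ev_SG; [| reflexivity]. eapply ev_mk2; [ | | exact Hy].
    eapply ev_mk1. apply ev_proj'; simpl; auto. apply ev_pow2c. reflexivity.
    apply ev_proj'; simpl; auto.
  - destruct (Nat.eq_dec y 0).
    + right. split. lia. intros (s & Hl & HP).
      assert (0 < y)%nat; [| lia]. apply Hyiff.
      pose proof (enc_range s). rewrite Hl in H. simpl Nat.pow in H.
      exists (enc_sit s - 2 ^ n)%nat. split. lia. exists s. split. lia. exact HP.
    + left. split. lia. destruct (proj1 Hyiff ltac:(lia)) as (i & Hi & s & Hs & HP).
      exists s. split; auto.
      pose proof (enc_range s). 
      destruct (Nat.lt_trichotomy (length s) n) as [Hlt | [Heq | Hgt]]; auto.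
      * pose proof (Nat.pow_le_mono_r 2 (S (length s)) n ltac:(lia) ltac:(lia)). lia.
      * pose proof (Nat.pow_le_mono_r 2 (S n) (length s) ltac:(lia) ltac:(lia)). simpl Nat.pow in *. lia.
Qed.


Lemma rsum_ext f g n : (forall k, f k = g k) -> rsum f n = rsum g n.
Proof. intros H; induction n; simpl; auto. rewrite IHn, H; auto. Qed.

Lemma rsum_scal c f n : rsum (fun k => c * f k) n = c * rsum f n.
Proof. induction n; simpl. ring. rewrite IHn. ring. Qed.

Lemma rsum_mono f n m : (forall k, 0 <= f k) -> (n <= m)%nat -> rsum f n <= rsum f m.
Proof. intros H Hnm. induction Hnm. lra. simpl. specialize (H m). lra. Qed.

Lemma rsum_sel_unbounded (Sel : nat -> bool) :
  (forall N, exists n, (N <= n)%nat /\ Sel n = true) ->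
  forall B : R, exists N, forall n, (N <= n)%nat -> B < rsum (fun k => b2R (Sel k)) n.
Proof.
  intros Hinf.
  assert (Hnn : forall k, 0 <= b2R (Sel k)) by (intros k; unfold b2R; destruct (Sel k); lra).
  assert (H : forall j : nat, exists N, INR j <= rsum (fun k => b2R (Sel k)) N).
  { induction j. exists 0%nat. simpl. lra.
    destruct IHj as (N & HN). destruct (Hinf N) as (n & Hn & Hs).
    exists (S n). rewrite S_INR. simpl. rewrite Hs. unfold b2R at 2.
    pose proof (rsum_mono _ _ _ Hnn Hn). lra. }
  intros B. destruct (archimed B) as (HB & _).
  destruct (H (Z.to_nat (up B))) as (N & HN). exists N. intros n Hn.
  pose proof (rsum_mono _ _ _ Hnn Hn).
  destruct (Z.lt_ge_cases (up B) 0) as [l|l].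
  - assert (B < 0) by (apply Rlt_trans with (IZR (up B)); auto; apply IZR_lt; lia).
    assert (0 <= rsum (fun k => b2R (Sel k)) N) by (apply Rle_trans with (rsum (fun k => b2R (Sel k)) 0); [simpl; lra | apply rsum_mono; auto; lia]).
    lra.
  - rewrite INR_IZR_INZ, Znat.Z2Nat.id in HN by lia. lra.
Qed.

Lemma wch_upper a b v (Sel : nat -> bool) :
  wCH_random (const_fs a b) v -> b < 1 -> rec_temporal Sel ->
  (forall N, exists n, (N <= n)%nat /\ Sel n = true) ->
  (forall n, Sel n = true -> v n = true) -> False.
Proof.
  intros Hw Hb Hrec Hinf Hv.
  pose proof (rsum_sel_unbounded Sel Hinf) as Hunb.
  destruct (Hw Sel Hrec Hunb) as (_ & Hup).
  destruct (Hup (1 - b) ltac:(lra)) as (N1 & HN1).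
  destruct (Hunb 0) as (N2 & HN2).
  specialize (HN1 (max N1 N2) ltac:(lia)). specialize (HN2 (max N1 N2) ltac:(lia)).
  rewrite (rsum_ext _ (fun k => (1 - b) * b2R (Sel k))) in HN1.
  - rewrite rsum_scal in HN1. unfold Rdiv in HN1. rewrite Rmult_assoc, Rinv_r in HN1 by lra. lra.
  - intros k. unfold upf, const_fs. simpl. destruct (Sel k) eqn:E.
    + rewrite (Hv k E). unfold b2R. ring.
    + unfold b2R. ring.
Qed.

Lemma wch_lower a b v (Sel : nat -> bool) :
  wCH_random (const_fs a b) v -> 0 < a -> rec_temporal Sel ->
  (forall N, exists n, (N <= n)%nat /\ Sel n = true) ->
  (forall n, Sel n = true -> v n = false) -> False.
Proof.
  intros Hw Ha Hrec Hinf Hv.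
  pose proof (rsum_sel_unbounded Sel Hinf) as Hunb.
  destruct (Hw Sel Hrec Hunb) as (Hlo & _).
  destruct (Hlo a Ha) as (N1 & HN1).
  destruct (Hunb 0) as (N2 & HN2).
  specialize (HN1 (max N1 N2) ltac:(lia)). specialize (HN2 (max N1 N2) ltac:(lia)).
  rewrite (rsum_ext _ (fun k => (- a) * b2R (Sel k))) in HN1.
  - rewrite rsum_scal in HN1. unfold Rdiv in HN1. rewrite Rmult_assoc, Rinv_r in HN1 by lra. lra.
  - intros k. unfold lowf, const_fs. simpl. destruct (Sel k) eqn:E.
    + rewrite (Hv k E). unfold b2R. ring.
    + unfold b2R. ring.
Qed.
From Stdlib Require Import Classical ClassicalEpsilon.

Lemma E_affine p q r f : p < q -> p <= r <= q -> E p f <= 0 -> E q f <= 0 -> E r f <= 0.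
Proof.
  intros Hpq Hr Hp Hq.
  assert (Hid : (q - p) * E r f = (q - r) * E p f + (r - p) * E q f) by (unfold E; ring).
  assert (0 <= (q - r) * - E p f) by (apply Rmult_le_pos; lra).
  assert (0 <= (r - p) * - E q f) by (apply Rmult_le_pos; lra).
  destruct (Rle_or_lt (E r f) 0); auto.
  assert (0 < (q - p) * E r f) by (apply Rmult_lt_0_compat; lra). nra.
Qed.

Lemma E_scaled m km r (T : sit -> R) (s : sit) : (0 < m + km)%nat -> r = INR m / INR (m + km) ->
  INR (m + km) * E r (Delta T s) =
  INR m * T (s ++ [true]) + INR km * T (s ++ [false]) - INR (m + km) * T s.
Proof.
  intros Hk ->. unfold E, Delta.
  assert (0 < INR (m + km)) by (apply lt_0_INR; lia).
  rewrite plus_INR in *. field. lra.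
Qed.

Lemma finite_bad r m km (T : sit -> R) varpi a b (side : bool) :
  wCH_random (const_fs a b) varpi -> 0 < a -> b < 1 -> rec_rat_sit T ->
  (0 < m + km)%nat -> r = INR m / INR (m + km) ->
  (forall s, E r (Delta T s) > 0 -> varpi (length s) = side) ->
  exists N, forall s, (N <= length s)%nat -> E r (Delta T s) <= 0.
Proof.
  intros Hw Ha Hb HT Hk Hr Hside.
  apply NNPP. intros Hnot.
  assert (Hinf : forall N, exists s, (N <= length s)%nat /\ E r (Delta T s) > 0).
  { intros N. apply NNPP. intros H. apply Hnot. exists N. intros s Hs.
    destruct (Rle_or_lt (E r (Delta T s)) 0); auto. exfalso. apply H. exists s. split; auto. }
  set (Q := fun n => exists s, length s = n /\
        INR m * T (s ++ [true]) + INR km * T (s ++ [false]) - INR (m + km) * T s > 0).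
  assert (HQ : forall s, E r (Delta T s) > 0 <->
     INR m * T (s ++ [true]) + INR km * T (s ++ [false]) - INR (m + km) * T s > 0).
  { intros s. pose proof (lt_0_INR (m + km) ltac:(lia)).
    rewrite <- (E_scaled m km r T s Hk Hr). split; intro H'.
    - apply Rmult_lt_0_compat; auto.
    - destruct (Rle_or_lt (E r (Delta T s)) 0); auto.
      assert (INR (m + km) * E r (Delta T s) <= 0); [|lra].
      rewrite <- (Rmult_0_r (INR (m + km))). apply Rmult_le_compat_l; lra. }
  set (Sel := fun n => if excluded_middle_informative (Q n) then true else false).
  destruct HT as (ca & cb & cd & HT).
  assert (Hrec : rec_temporal Sel).
  { exists (selc ca cb cd m km). intros n.
    destruct (selc_spec ca cb cd m km T HT n) as (y & Hy & [[-> HQn] | [-> HnQ]]);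
    unfold Sel; destruct (excluded_middle_informative (Q n)); try contradiction; auto. }
  assert (Hinf' : forall N, exists n, (N <= n)%nat /\ Sel n = true).
  { intros N. destruct (Hinf N) as (s & Hs & HE). exists (length s). split; auto.
    unfold Sel. destruct (excluded_middle_informative (Q (length s))); auto.
    exfalso. apply n. exists s. split; auto. apply HQ; auto. }
  assert (Hv : forall n, Sel n = true -> varpi n = side).
  { intros n. unfold Sel. destruct (excluded_middle_informative (Q n)) as [(s & Hl & Hs)|]; [|discriminate].
    intros _. subst n. apply Hside. apply HQ. exact Hs. }
  destruct side.
  - exact (wch_upper a b varpi Sel Hw Hb Hrec Hinf' Hv).
  - exact (wch_lower a b varpi Sel Hw Ha Hrec Hinf' Hv).
Qed.

Definition Tp (T : sit -> R) (N K : nat) (s : sit) : R :=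
  if Nat.ltb (length s) N then 1 else T s / INR K.

Definition cndc N := SG (SUB (constc (2 ^ N)) X).
Definition ncndc N := SUB (constc 1) (cndc N).

Lemma Tp_rec T N K : rec_rat_sit T -> (1 <= K)%nat -> rec_rat_sit (Tp T N K).
Proof.
  intros (ca & cb & cd & HT) HK.
  exists (ADD (cndc N) (MUL (ncndc N) (Ac ca X))), (MUL (ncndc N) (Bc cb X)),
         (MUL (ncndc N) (ADD (MUL (mk1 cd X) (constc K)) (constc (K - 1)))).
  intros s. destruct (HT s) as (a & b & d & Ha & Hb & Hd & Hs).
  pose proof (enc_range s) as Hr.
  unfold Tp. destruct (Nat.ltb_spec (length s) N) as [Hlt | Hge].
  - assert (Hc : (Nat.min (2 ^ N - enc_sit s) 1 = 1)%nat).
    { pose proof (Nat.pow_le_mono_r 2 (S (length s)) N ltac:(lia) ltac:(lia)). lia. }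
    exists 1%nat, 0%nat, 0%nat. split; [|split; [|split]].
    + unfold cndc, ncndc, Ac, X. evt. simpl nth. rewrite Hc. lia.
    + unfold cndc, ncndc, Bc, X. evt. simpl nth. rewrite Hc. lia.
    + unfold cndc, ncndc, X. evt. simpl nth. rewrite Hc. lia.
    + simpl. field.
  - assert (Hc : (Nat.min (2 ^ N - enc_sit s) 1 = 0)%nat).
    { pose proof (Nat.pow_le_mono_r 2 N (length s) ltac:(lia) ltac:(lia)). lia. }
    exists a, b, (d * K + (K - 1))%nat. split; [|split; [|split]].
    + unfold cndc, ncndc, Ac, X. evt. simpl nth. rewrite Hc. lia.
    + unfold cndc, ncndc, Bc, X. evt. simpl nth. rewrite Hc. lia.
    + unfold cndc, ncndc, X. evt. simpl nth. rewrite Hc. lia.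
    + rewrite Hs. replace (S (d * K + (K - 1))) with (S d * K)%nat by lia.
      rewrite mult_INR. assert (0 < INR (S d)) by (apply lt_0_INR; lia).
      assert (0 < INR K) by (apply lt_0_INR; lia). field. lra.
Qed.

Lemma tau_comp tau K : computable_real_nat tau -> (1 <= K)%nat ->
  computable_real_nat (fun n => tau n / INR K).
Proof.
  intros (ca & cb & cd & Ht) HK.
  exists ca, cb, (ADD (MUL cd (constc K)) (constc (K - 1))).
  intros n k. destruct (Ht n k) as (a & b & d & Ha & Hb & Hd & Hs).
  exists a, b, (d * K + (K - 1))%nat. split; [|split; [|split]]; auto.
  - evt. all: try eassumption; try lia.
  - replace (S (d * K + (K - 1))) with (S d * K)%nat by lia.
    rewrite mult_INR. assert (0 < INR (S d)) by (apply lt_0_INR; lia).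
    assert (1 <= INR K) by (apply (le_INR 1); lia).
    replace (tau n / INR K - (INR a - INR b) / (INR (S d) * INR K))
      with ((tau n - (INR a - INR b) / INR (S d)) / INR K) by (field; lra).
    unfold Rdiv. rewrite Rabs_mult, Rabs_inv, (Rabs_right (INR K)) by lra.
    pose proof (Rabs_pos (tau n - (INR a - INR b) * / INR (S d))).
    assert (0 < / INR K <= 1).
    { split. apply Rinv_0_lt_compat; lra. rewrite <- Rinv_1. apply Rinv_le_contravar; lra. }
    unfold Rdiv in Hs. nra.
Qed.

Lemma finite_bound (n : nat) : forall f : sit -> R, exists M, forall s, length s = n -> f s <= M.
Proof.
  induction n; intros f.
  - exists (f nil). intros s Hs. destruct s; [lra | discriminate].
  - destruct (IHn (fun s => f (true :: s))) as (M1 & H1).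
    destruct (IHn (fun s => f (false :: s))) as (M0 & H0).
    exists (Rmax M1 M0). intros [|x s] Hs; [discriminate|]. simpl in Hs. injection Hs as Hs.
    destruct x. apply Rle_trans with M1; auto. apply Rmax_l. apply Rle_trans with M0; auto. apply Rmax_r.
Qed.

Lemma nat_above (M : R) : exists K : nat, (1 <= K)%nat /\ M <= INR K.
Proof.
  destruct (archimed M) as (HM & _).
  exists (S (Z.to_nat (up M))). split. lia.
  destruct (Z.lt_ge_cases (up M) 0) as [l|l].
  - assert (M < 0) by (apply Rlt_trans with (IZR (up M)); auto; apply IZR_lt; lia).
    pose proof (pos_INR (S (Z.to_nat (up M)))). lra.
  - rewrite S_INR, INR_IZR_INZ, Znat.Z2Nat.id by lia. lra.
Qed.

Lemma Q_ratio (x : Q) : 0 <= Q2R x -> Q2R x <= 1 ->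
  exists m km : nat, (0 < m + km)%nat /\ Q2R x = INR m / INR (m + km).
Proof.
  destruct x as [n d]. unfold Q2R. simpl. intros H0 H1.
  assert (Hd : 0 < IZR (Z.pos d)) by (apply IZR_lt; lia).
  assert (Hn : (0 <= n)%Z).
  { destruct (Z.lt_ge_cases n 0); auto. exfalso.
    assert (IZR n < 0) by (apply IZR_lt; auto).
    assert (IZR n / IZR (Z.pos d) < 0). { unfold Rdiv. apply Rmult_neg_pos; auto. apply Rinv_0_lt_compat; auto. }
    lra. }
  assert (Hnd : (n <= Z.pos d)%Z).
  { apply le_IZR. apply Rmult_le_reg_r with (/ IZR (Z.pos d)). apply Rinv_0_lt_compat; auto.
    rewrite Rinv_r by lra. exact H1. }
  exists (Z.to_nat n), (Pos.to_nat d - Z.to_nat n)%nat. split. lia.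
  replace (Z.to_nat n + (Pos.to_nat d - Z.to_nat n))%nat with (Pos.to_nat d) by lia.
  rewrite !INR_IZR_INZ, Znat.Z2Nat.id by lia. rewrite Znat.positive_nat_Z. reflexivity.
Qed.

Lemma build (p q a b : R) (varpi : path) (T : sit -> R) :
  0 <= p -> p < q -> q <= 1 -> 0 < a -> b < 1 ->
  (exists m km : nat, (0 < m + km)%nat /\ p = INR m / INR (m + km)) ->
  (exists m km : nat, (0 < m + km)%nat /\ q = INR m / INR (m + km)) ->
  wCH_random (const_fs a b) varpi ->
  test_class (phi_pq varpi p q) T ->
  exists N K, (1 <= K)%nat /\ test_class (const_fs p q) (Tp T N K) /\
    forall s, (N <= length s)%nat -> Tp T N K s = T s / INR K.
Proof.
  intros Hp Hpq Hq Ha Hb (mp & kmp & Hkp & Hpr) (mq & kmq & Hkq & Hqr) Hw (Hsm & Hnil & Hpos & Hrec).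
  destruct (finite_bad p mp kmp T varpi a b true Hw Ha Hb Hrec Hkp Hpr) as (Np & HNp).
  { intros s HE. destruct (varpi (length s)) eqn:Hv; auto. exfalso.
    assert (E p (Delta T s) <= 0); [|lra]. apply Hsm. unfold lowf, upf, phi_pq. rewrite Hv. simpl. lra. }
  destruct (finite_bad q mq kmq T varpi a b false Hw Ha Hb Hrec Hkq Hqr) as (Nq & HNq).
  { intros s HE. destruct (varpi (length s)) eqn:Hv; auto. exfalso.
    assert (E q (Delta T s) <= 0); [|lra]. apply Hsm. unfold lowf, upf, phi_pq. rewrite Hv. simpl. lra. }
  set (N := S (Nat.max Np Nq)).
  destruct (finite_bound N T) as (M & HM).
  destruct (nat_above M) as (K & HK & HMK).
  assert (HK0 : 0 < INR K) by (apply lt_0_INR; lia).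
  exists N, K. split; auto. split; [split; [|split; [|split]]|].
  - intros s r Hr. unfold lowf, upf, const_fs in Hr; simpl in Hr.
    unfold Delta, E, Tp. rewrite !length_app. simpl length.
    destruct (Nat.ltb_spec (length s) N);
    destruct (Nat.ltb_spec (length s + 1) N).
    + lra.
    + assert (length (s ++ [true]) = N) by (rewrite length_app; simpl; lia).
      assert (length (s ++ [false]) = N) by (rewrite length_app; simpl; lia).
      apply HM in H1. apply HM in H2.
      assert (T (s ++ [true]) / INR K <= 1) by (apply Rmult_le_reg_r with (INR K); auto; field_simplify; lra).
      assert (T (s ++ [false]) / INR K <= 1) by (apply Rmult_le_reg_r with (INR K); auto; field_simplify; lra).
      nra.
    + lia.
    + assert (Hle : E r (Delta T s) <= 0).
      { apply E_affine with p q; auto. apply HNp; lia. apply HNq; lia. }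
      unfold E, Delta in Hle.
      replace (r * (T (s ++ [true]) / INR K - T s / INR K) +
               (1 - r) * (T (s ++ [false]) / INR K - T s / INR K))
        with ((r * (T (s ++ [true]) - T s) + (1 - r) * (T (s ++ [false]) - T s)) / INR K) by (field; lra).
      unfold Rdiv. assert (0 < / INR K) by (apply Rinv_0_lt_compat; auto). nra.
  - unfold Tp. simpl. reflexivity.
  - intros s. unfold Tp. destruct (Nat.ltb (length s) N). lra.
    apply Rdiv_lt_0_compat; auto.
  - apply Tp_rec; auto.
  - intros s Hs. unfold Tp. destruct (Nat.ltb_spec (length s) N). lia. reflexivity.
Qed.

Lemma Rdiv_le_0_compat' x y : 0 <= x -> 0 < y -> 0 <= x / y.
Proof. intros. unfold Rdiv. apply Rmult_le_pos; auto. left; apply Rinv_0_lt_compat; auto. Qed.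

Lemma test_const_phi p q varpi T : p <= q ->
  test_class (const_fs p q) T -> test_class (phi_pq varpi p q) T.
Proof.
  intros Hpq (Hsm & H1 & H2 & H3). split; auto.
  intros s r Hr. apply Hsm. unfold lowf, upf, const_fs, phi_pq in *. simpl.
  destruct (varpi (length s)); simpl in Hr; lra.
Qed.

Theorem corollary33 :
  forall (k : rkind) (p q : Q) (a b : R) (varpi w : path),
    0 <= Q2R p -> Q2R p < Q2R q -> Q2R q <= 1 ->
    0 < a -> a <= b -> b < 1 ->
    wCH_random (const_fs a b) varpi ->
    (R_random k (phi_pq varpi (Q2R p) (Q2R q)) w <->
     R_random k (const_fs (Q2R p) (Q2R q)) w).
Proof.
  intros k p q a b varpi w Hp Hpq Hq Ha Hab Hb Hw.
  pose proof (Q_ratio p Hp ltac:(lra)) as Hrp.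
  pose proof (Q_ratio q ltac:(lra) Hq) as Hrq.
  destruct k; simpl; unfold C_random, S_random; split.
  - intros Hr (T & HT & Hunb). apply Hr. exists T. split; auto.
    apply test_const_phi; auto; lra.
  - intros Hr (T & HT & Hunb).
    destruct (build _ _ a b varpi T Hp Hpq Hq Ha Hb Hrp Hrq Hw HT) as (N & K & HK & HT' & Heq).
    apply Hr. exists (Tp T N K). split; auto.
    intros B N0. destruct (Hunb (B * INR K) (Nat.max N0 N)) as (n & Hn & HB).
    exists n. split. lia. rewrite Heq by (rewrite prefix_length; lia).
    assert (0 < INR K) by (apply lt_0_INR; lia).
    apply Rmult_lt_reg_r with (INR K); auto. field_simplify; lra.
  - intros Hr (T & tau & HT & Htau & Hunb). apply Hr. exists T, tau. split; auto.
    apply test_const_phi; auto; lra.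
  - intros Hr (T & tau & HT & Htau & Hunb).
    destruct (build _ _ a b varpi T Hp Hpq Hq Ha Hb Hrp Hrq Hw HT) as (N & K & HK & HT' & Heq).
    assert (HK0 : 0 < INR K) by (apply lt_0_INR; lia).
    assert (HK1 : 1 <= INR K) by (apply (le_INR 1); lia).
    apply Hr. exists (Tp T N K), (fun n => tau n / INR K). split; auto.
    destruct Htau as (Hc & Hnn & Hmono & Hunbt).
    split; [split; [|split; [|split]]|].
    + apply tau_comp; auto.
    + intros n. apply Rdiv_le_0_compat'; auto.
    + intros n m Hnm. apply Rmult_le_compat_r. left; apply Rinv_0_lt_compat; auto. auto.
    + intros B. destruct (Hunbt (B * INR K)) as (n & Hn). exists n.
      apply Rmult_lt_reg_r with (INR K); auto. field_simplify; lra.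
    + intros eps Heps N0. destruct (Hunb eps Heps (Nat.max N0 N)) as (n & Hn & He).
      exists n. split. lia. rewrite Heq by (rewrite prefix_length; lia).
      replace (T (prefix w n) / INR K - tau n / INR K) with ((T (prefix w n) - tau n) / INR K) by (field; lra).
      destruct (Rle_or_lt 0 (T (prefix w n) - tau n)).
      * assert (0 <= (T (prefix w n) - tau n) / INR K) by (apply Rdiv_le_0_compat'; auto). lra.
      * apply Rmult_lt_reg_r with (INR K); auto. field_simplify; [|lra]. nra.
Qed.
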